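(* Let $G$ be a graph. Then (i) $\mathrm{gp}(G)\le 2\,\mathrm{ip}(G)$; and (ii) if $V(G)$ can be covered by isometric cycles of $G$, then $\mathrm{gp}(G)\le 3\,\mathrm{ic}(G)$.
   Context: All graphs are finite, simple and connected. A subgraph $H$ of $G$ is isometric if $d_H(x,y)=d_G(x,y)$ for all $x,y\in V(H)$. The isometric-path number $\mathrm{ip}(G)$ is the minimum number of isometric paths (geodesics) of $G$ whose vertex sets cover $V(G)$. The isometric-cycle number $\mathrm{ic}(G)$ is the minimum number of isometric cycles of $G$ whose vertex sets cover $V(G)$. A set $S$ of vertices is a general position set if no three vertices of $S$ lie on a common geodesic of $G$; $\mathrm{gp}(G)$ is the maximum cardinality of a general position set of $G$. *)

(* Defs.v *)
From mathcomp Require Import all_boot.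
Set Implicit Arguments. Unset Strict Implicit. Unset Printing Implicit Defensive.

Section GraphDefs.
Variables (T : finType) (e : rel T).

Definition simple_connected_graph : Prop :=
  [/\ symmetric e, irreflexive e & forall x y : T, connect e x y].

Definition reach (k : nat) (x y : T) : Prop :=
  exists p : seq T, [/\ size p = k, path e x p & last x p = y].

Definition is_dist (x y : T) (n : nat) : Prop :=
  reach n x y /\ forall k, reach k x y -> n <= k.

(* the vertex sequence x :: p is a geodesic (isometric path, i.e. a
   shortest path between its end vertices) *)
Definition geodesic (x : T) (p : seq T) : Prop :=
  path e x p /\ is_dist x (last x p) (size p).

(* the vertex sequence c (closed up) is an isometric cycle of G:
   a cycle on >= 3 distinct vertices with d_C = d_G on its vertices *)
Definition isometric_cycle (c : seq T) : Prop :=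
  [/\ uniq c, 3 <= size c, cycle e c &
    forall (x0 : T) (i j : nat), i < size c -> j < size c ->
      let d := if i <= j then j - i else i - j in
      is_dist (nth x0 c i) (nth x0 c j) (minn d (size c - d))].

Definition gp_set (S : {set T}) : Prop :=
  forall x p, geodesic x p -> #|[set v in S | v \in x :: p]| <= 2.

Definition is_gp (n : nat) : Prop :=
  (exists S : {set T}, gp_set S /\ #|S| = n) /\
  (forall S : {set T}, gp_set S -> #|S| <= n).

Definition ip_cover (ps : seq (T * seq T)) : Prop :=
  (forall q, q \in ps -> geodesic q.1 q.2) /\
  (forall v : T, exists2 q, q \in ps & v \in q.1 :: q.2).

Definition ic_cover (cs : seq (seq T)) : Prop :=
  (forall c, c \in cs -> isometric_cycle c) /\
  (forall v : T, exists2 c, c \in cs & v \in c).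

Definition is_ip (n : nat) : Prop :=
  (exists ps, ip_cover ps /\ size ps = n) /\
  (forall ps, ip_cover ps -> n <= size ps).

Definition is_ic (n : nat) : Prop :=
  (exists cs, ic_cover cs /\ size cs = n) /\
  (forall cs, ic_cover cs -> n <= size cs).

End GraphDefs.

(* Main.v *)
Require Import Defs.
From mathcomp Require Import all_boot.
From mathcomp Require Import zify.
Set Implicit Arguments. Unset Strict Implicit. Unset Printing Implicit Defensive.

Section S.
Variables (T : finType) (e : rel T).

Lemma cycle_step (x0 : T) c t : cycle e c -> t < size c ->
  e (nth x0 c t) (nth x0 c (t.+1 %% size c)).
Proof.
case: c => [|x s] //= /(pathP x0) H lt.
have := H t; rewrite size_rcons => /(_ lt).
rewrite -rcons_cons !nth_rcons /= ltnS.
case: (ltngtP t (size s)) => [lts|gts|->].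
- by rewrite modn_small ?ltnS // (ltnW lts).
- by move: lt; rewrite /= ltnS leqNgt gts.
- by rewrite modnn /=.
Qed.

Lemma path_map_iota (f : nat -> T) a m : (forall t, e (f t) (f t.+1)) ->
  path e (f a) (map f (iota a.+1 m)).
Proof.
move=> H; elim: m a => [|m IH] a //=.
by rewrite H IH.
Qed.

Lemma last_map_iota (f : nat -> T) a m :
  last (f a) (map f (iota a.+1 m)) = f (a + m).
Proof.
elim: m a => [|m IH] a /=; first by rewrite addn0.
by rewrite IH addSnnS.
Qed.

Lemma mem_map_iota (f : nat -> T) a m t : a <= t <= a + m ->
  f t \in f a :: map f (iota a.+1 m).
Proof.
case/andP=> h1 h2; rewrite inE.
case: (ltngtP a t) h1 => // [lt _|-> _]; last by rewrite eqxx.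
apply/orP; right; apply: map_f; rewrite mem_iota; lia.
Qed.

Lemma cover_card (X : eqType) (S : {set T}) (cs : seq X) (f : X -> {set T}) k :
  (forall v, v \in S -> exists2 q, q \in cs & v \in f q) ->
  (forall q, q \in cs -> #|S :&: f q| <= k) -> #|S| <= k * size cs.
Proof.
elim: cs S => [|q cs IH] S H1 H2 /=.
  rewrite muln0 leqn0 cards_eq0; apply/eqP/setP => v; rewrite inE.
  by apply/negbTE; apply/negP => /H1 [].
rewrite -(cardsID (f q) S) mulnS leq_add //; first by apply: H2; rewrite inE eqxx.
apply: IH.
  move=> v; rewrite inE => /andP [nv vS]; case: (H1 v vS) => q'.
  rewrite inE => /orP [/eqP -> | qin] fv; first by rewrite fv in nv.
  by exists q'.
move=> q' qin; apply: leq_trans (H2 q' _); last by rewrite inE qin orbT.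
by apply: subset_leq_card; apply: setSI; apply: subsetDl.
Qed.

Lemma three_le (A : {set T}) a b c : uniq [:: a; b; c] ->
  a \in A -> b \in A -> c \in A -> 3 <= #|A|.
Proof.
move=> u ha hb hc; rewrite -[3]/(size [:: a; b; c]) -(card_uniqP u).
apply: subset_leq_card; apply/subsetP => v; rewrite !inE.
by case/or3P => /eqP ->.
Qed.

Lemma cycle_gp (S : {set T}) c : isometric_cycle e c -> gp_set e S ->
  #|[set v in S | v \in c] | <= 3.
Proof.
case=> uc c3 cyc iso gp.
case: c uc c3 cyc iso => [|x0 s] // uc c3 cyc iso.
set c := x0 :: s in uc c3 cyc iso *.
set n := size c in c3 iso *.
pose L := [seq t <- iota 0 n | nth x0 c t \in S].
have -> : #|[set v in S | v \in c]| = size L.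
  have e1 : [set v in S | v \in c] =i [seq v <- c | v \in S].
    by move=> v; rewrite !inE mem_filter.
  rewrite (eq_card e1) (card_uniqP (filter_uniq _ uc)).
  rewrite -(size_map (nth x0 c)) /L.
  rewrite (_ : map _ (filter _ _) = [seq v <- map (nth x0 c) (iota 0 n) | v \in S]);
    last by rewrite filter_map.
  by rewrite map_nth_iota0 // take_size.
have sL : sorted ltn L by apply: sorted_filter; [exact: ltn_trans | exact: iota_ltn_sorted].
have inL t : t \in L -> t < n /\ nth x0 c t \in S.
  by rewrite mem_filter mem_iota add0n => /andP [-> /andP [_ ->]].
rewrite leqNgt; apply/negP => big.
case: L sL inL big => [|i [|j [|k [|l L']]]] //= sL inL _.
move: sL => /andP [ij /andP [jk /andP [kl _]]].
have [_ Si] := inL i (mem_head _ _).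
have [_ Sj] := inL j ltac:(by rewrite !inE eqxx !orbT).
have [_ Sk] := inL k ltac:(by rewrite !inE eqxx !orbT).
have [ln Sl] := inL l ltac:(by rewrite !inE eqxx !orbT).
pose g t := nth x0 c (t %% n).
have n0 : 0 < n by lia.
have step t : e (g t) (g t.+1).
  rewrite /g; have := @cycle_step x0 c (t %% n) cyc (ltn_pmod _ n0).
  by rewrite -/n -addn1 modnDml addn1.
have gE t : t < n -> g t = nth x0 c t by move=> h; rewrite /g modn_small.
have gnE : g (n + i) = nth x0 c i.
  by rewrite /g -modnDml modnn add0n modn_small //; lia.
have neq a b : a < n -> b < n -> a != b -> nth x0 c a != nth x0 c b.
  by move=> ha hb; rewrite nth_uniq.
have arc a m t1 t2 t3 : a < n -> is_dist e (g a) (g (a + m)) m ->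
    a <= t1 <= a + m -> a <= t2 <= a + m -> a <= t3 <= a + m ->
    uniq [:: g t1; g t2; g t3] -> g t1 \in S -> g t2 \in S -> g t3 \in S -> False.
  move=> an hd h1 h2 h3 u s1 s2 s3.
  have geo : geodesic e (g a) (map g (iota a.+1 m)).
    split; first exact: path_map_iota.
    by rewrite last_map_iota size_map size_iota.
  have := gp _ _ geo; apply/negP; rewrite -ltnNge.
  by apply: (three_le u); rewrite inE ?s1 ?s2 ?s3 /=; apply: mem_map_iota.
case: (leqP (2 * (k - i)) n) => hk.
  apply: (arc i (k - i) i j k) => //; try lia.
  - have -> : i + (k - i) = k by lia.
    rewrite !gE; try lia.
    have := iso x0 i k; rewrite -/n; have -> : i <= k by lia.
    move=> /(_ ltac:(lia) ltac:(lia)); cbv zeta.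
    by have -> : minn (k - i) (n - (k - i)) = k - i by lia.
  - rewrite /= !inE !gE; try lia.
    by rewrite negb_or !nth_uniq // -/n; lia.
  - by rewrite gE //; lia.
  - by rewrite gE //; lia.
  - by rewrite gE //; lia.
apply: (arc k (n - k + i) k l (n + i)) => //; try lia.
- have -> : k + (n - k + i) = n + i by lia.
  rewrite gnE gE; try lia.
  have := iso x0 k i; rewrite -/n; have -> : (k <= i) = false by lia.
  move=> /(_ ltac:(lia) ltac:(lia)); cbv zeta.
  by have -> : minn (k - i) (n - (k - i)) = n - k + i by lia.
- rewrite /= !inE gnE !gE; try lia.
  by rewrite negb_or !nth_uniq // -/n; lia.
- by rewrite gE //; lia.
- by rewrite gE //; lia.
- by rewrite gnE.
Qed.
End S.

Theorem corollary3p2 (T : finType) (e : rel T) :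
  simple_connected_graph e ->
  (forall g i : nat, is_gp e g -> is_ip e i -> g <= 2 * i) /\
  ((exists cs : seq (seq T), ic_cover e cs) ->
   forall g c : nat, is_gp e g -> is_ic e c -> g <= 3 * c).
Proof.
move=> _; split.
  move=> g i [[S [gS <-]] _] [[ps [[geo cov] <-]] _].
  apply: (@cover_card T (T * seq T)%type S ps (fun q => [set v | v \in q.1 :: q.2])).
    by move=> v _; case: (cov v) => q qin vq; exists q => //; rewrite inE.
  move=> q qin; case: q qin => x p qin.
  have := gS x p (geo _ qin).
  by rewrite (_ : S :&: _ = [set v in S | v \in x :: p]) //; apply/setP => v; rewrite !inE.
move=> _ g c [[S [gS <-]] _] [[cs [[icy cov] <-]] _].
apply: (@cover_card T (seq T) S cs (fun q => [set v | v \in q])).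
  by move=> v _; case: (cov v) => q qin vq; exists q => //; rewrite inE.
move=> q qin; have := cycle_gp (icy _ qin) gS.
by rewrite (_ : S :&: _ = [set v in S | v \in q]) //; apply/setP => v; rewrite !inE.
Qed.
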